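(* Let $\mathcal{V}$ (respondents) and $\mathcal{X}$ (queries) be finite sets, let $k\ge 1$ and $T\ge 1$ be integers with $|\mathcal{X}|\ge T$, and let $f:2^{\mathcal{V}\times\mathcal{X}}\to\mathbb{R}_{\ge 0}$ satisfy $f(\emptyset)=0$ and be monotone and submodular: for all $W_1\subseteq W_2\subseteq \mathcal{V}\times\mathcal{X}$ and all $W\subseteq \mathcal{V}\times\mathcal{X}$, $f(W_2)\ge f(W_1)$ and $\Delta(W\mid W_1)\ge \Delta(W\mid W_2)$, where $\Delta(A\mid S)=f(S\cup A)-f(S)$. Define the joint greedy sequence $(R_1,x_1),\dots,(R_T,x_T)$ by $S_0=\emptyset$ and, for $t=1,\dots,T$, $$(R_t,x_t)\in\arg\max_{R\subseteq\mathcal{V},\,|R|\le k,\; x\in\mathcal{X}\setminus\{x_1,\dots,x_{t-1}\}}\Delta\big(R\times\{x\}\mid S_{t-1}\big),\qquad S_t=S_{t-1}\cup (R_t\times\{x_t\}),$$ (ties broken arbitrarily). Then for every sequence $(R_1^*,x_1^* ),\dots,(R_T^*,x_T^* )$ with $R_t^*\subseteq\mathcal{V}$, $|R_t^*|\le k$, and pairwise distinct queries $x_1^*,\dots,x_T^*\in\mathcal{X}$, setting $S_T^*=\bigcup_{t=1}^T R_t^*\times\{x_t^*\}$, we have $$f(S_T^* )\le \frac{2}{1-e^{-2}}\, f(S_T).$$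
   Context: A pair $(R,x)$ with $R\subseteq\mathcal{V}$, $x\in\mathcal{X}$ (a subset of respondents asked query $x$) is identified with the set $R\times\{x\}\subseteq\mathcal{V}\times\mathcal{X}$; a history of selected pairs is the union of these sets. $f$ is a utility function measuring information gained about a group's latent properties (e.g. expected information gain). *)

(* Defs.v *)
From HB Require Import structures.
From mathcomp Require Import all_boot all_order all_algebra.
From mathcomp Require Import all_classical all_reals all_analysis.
Set Implicit Arguments. Unset Strict Implicit. Unset Printing Implicit Defensive.
Import Order.TTheory GRing.Theory Num.Theory.
Local Open Scope ring_scope.

Definition marg (R : realType) (V X : finType) (f : {set V * X} -> R)
  (A S : {set V * X}) : R := f (S :|: A) - f S.

Definition pairset (V X : finType) (Rr : {set V}) (x : X) : {set V * X} :=
  finset.setX Rr [set x].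

(* History after the first t selections (indices 0..t-1). *)
Definition hist (V X : finType) (Rs : nat -> {set V}) (xs : nat -> X) (t : nat)
  : {set V * X} := \bigcup_(i < t) pairset (Rs i) (xs i).

(* Main.v *)
Require Import Defs.
From HB Require Import structures.
From mathcomp Require Import all_boot all_order all_algebra.
From mathcomp Require Import all_classical all_reals all_analysis.
Import Order.TTheory GRing.Theory Num.Theory.
Local Open Scope ring_scope.

Lemma hist_rec (V X : finType) (Rs : nat -> {set V}) (xs : nat -> X) t :
  hist Rs xs t.+1 = hist Rs xs t :|: pairset (Rs t) (xs t).
Proof. by rewrite /hist big_ord_recr. Qed.

Lemma hist0 (V X : finType) (Rs : nat -> {set V}) (xs : nat -> X) :
  hist Rs xs 0 = finset.set0.
Proof. by rewrite /hist big_ord0. Qed.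

Lemma hist_mono (V X : finType) (Rs : nat -> {set V}) (xs : nat -> X) t u :
  (t <= u)%N -> hist Rs xs t \subset hist Rs xs u.
Proof.
elim: u => [|u IH]; first by rewrite leqn0 => /eqP ->.
rewrite leq_eqVlt => /orP [/eqP -> //| ]; rewrite ltnS => /IH H.
by rewrite hist_rec (fintype.subset_trans H) // finset.subsetUl.
Qed.

Lemma sum_le_card (R : realType) (I J : finType) (P : {set I}) (Q : {set J})
  (e : I -> R) (d : J -> R) : #|P| = #|Q| ->
  (forall i j, i \in P -> j \in Q -> e i <= d j) ->
  \sum_(i in P) e i <= \sum_(j in Q) d j.
Proof.
move=> hc hle.
case hn: #|Q| => [|n].
  move: hc; rewrite hn => /cards0_eq ->; move/cards0_eq: hn => ->.
  by rewrite !big_set0.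
have H : \sum_(i in P) \sum_(j in Q) e i <= \sum_(i in P) \sum_(j in Q) d j.
  by apply: ler_sum => i iP; apply: ler_sum => j jQ; exact: hle.
move: H; rewrite (eq_bigr (fun i => e i *+ #|Q|)); last by move=> i _; rewrite sumr_const.
rewrite sumrMnl sumr_const hc hn.
by rewrite (ler_pMn2r (R:=R) (ltn0Sn n)).
Qed.

Theorem theorem1 (R : realType) (V X : finType) (k T : nat)
  (f : {set V * X} -> R)
  (hk : (1 <= k)%N) (hT : (1 <= T)%N) (hX : (T <= #|X|)%N)
  (f_ge0 : forall W, 0 <= f W)
  (f0 : f finset.set0 = 0)
  (f_mono : forall W1 W2 : {set V * X}, W1 \subset W2 -> f W1 <= f W2)
  (f_sub : forall W1 W2 W : {set V * X}, W1 \subset W2 ->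
              marg f W W2 <= marg f W W1)
  (Rg : nat -> {set V}) (xg : nat -> X)
  (greedy_card : forall t, (t < T)%N -> (#|Rg t| <= k)%N)
  (greedy_new : forall t, (t < T)%N -> forall i, (i < t)%N -> xg t != xg i)
  (greedy_max : forall t, (t < T)%N ->
     forall (Rr : {set V}) (x : X), (#|Rr| <= k)%N ->
       (forall i, (i < t)%N -> x != xg i) ->
       marg f (pairset Rr x) (hist Rg xg t)
         <= marg f (pairset (Rg t) (xg t)) (hist Rg xg t))
  (Ro : nat -> {set V}) (xo : nat -> X)
  (opt_card : forall t, (t < T)%N -> (#|Ro t| <= k)%N)
  (opt_distinct : forall i j, (i < T)%N -> (j < T)%N -> xo i = xo j -> i = j) :
  f (hist Ro xo T) <= 2 / (1 - expR (-2)) * f (hist Rg xg T).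
Proof.
set G := hist Rg xg T.
pose dl (j : nat) := marg f (pairset (Rg j) (xg j)) (hist Rg xg j).
pose ep (i : nat) := marg f (pairset (Ro i) (xo i)) G.
have tele : forall n, f (hist Rg xg n) = \sum_(j < n) dl j.
  elim=> [|n IH]; first by rewrite hist0 f0 big_ord0.
  by rewrite big_ord_recr /= -IH /dl /marg hist_rec addrC subrK.
have ub : forall n, f (G :|: hist Ro xo n) - f G <= \sum_(i < n) ep i.
  elim=> [|n IH]; first by rewrite hist0 finset.setU0 subrr big_ord0.
  rewrite big_ord_recr /= hist_rec finset.setUA.
  have := f_sub G (G :|: hist Ro xo n) (pairset (Ro n) (xo n)) (finset.subsetUl _ _).
  rewrite /marg -/(ep n) => H.
  rewrite -(subrK (f (G :|: hist Ro xo n)) (f _)) -addrA.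
  by rewrite [X in _ <= X]addrC; apply: lerD.
pose A := [set i : 'I_T | [exists j : 'I_T, xg j == xo i]].
pose q (i : 'I_T) := odflt i [pick j : 'I_T | xg j == xo i].
have qP : forall i, i \in A -> xg (q i) = xo i.
  move=> i; rewrite inE => /existsP [j /eqP hj]; rewrite /q.
  by case: pickP => [j' /eqP //|/(_ j)]; rewrite hj eqxx.
have qinj : {in A &, injective q}.
  move=> i1 i2 h1 h2 hq; apply/eqP; rewrite -val_eqE; apply/eqP; apply: (opt_distinct _ _ (ltn_ord i1) (ltn_ord i2)).
  by rewrite -(qP _ h1) -(qP _ h2) hq.
have hA : forall i, i \in A -> ep i <= dl (q i).
  move=> i iA; apply: le_trans (f_sub _ _ _ (@hist_mono _ _ Rg xg _ _ (ltnW (ltn_ord (q i))))) _.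
  apply: greedy_max => //; first exact: opt_card.
  by move=> i' hi'; rewrite -(qP _ iA); apply: greedy_new.
have hnA : forall i (j : 'I_T), i \in ~: A -> ep i <= dl j.
  move=> i j; rewrite inE inE => /existsP nA.
  apply: le_trans (f_sub _ _ _ (@hist_mono _ _ Rg xg _ _ (ltnW (ltn_ord j)))) _.
  apply: greedy_max => //; first exact: opt_card.
  move=> i' hi'; apply/eqP => e; apply: nA.
  exists (Ordinal (ltn_trans hi' (ltn_ord j))); by rewrite /= e.
have key : \sum_(i < T) ep i <= \sum_(j < T) dl j.
  rewrite (bigID (mem A)) [X in _ <= X](bigID (mem (q @: A))) /=.
  apply: lerD.
    have -> : \sum_(j < T | j \in q @: A) dl j = \sum_(i in A) dl (q i).
      exact: big_imset.
    apply: ler_sum => i iA; exact: hA.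
  rewrite (eq_bigl (mem (~: A))); last by move=> i; rewrite /= finset.in_setC.
  rewrite [X in _ <= X](eq_bigl (mem (~: (q @: A)))); last by move=> i; rewrite /= finset.in_setC.
  apply: sum_le_card.
    apply/eqP; rewrite -(eqn_add2l #|A|) cardsC -{1}(card_in_imset qinj) cardsC //.
  by move=> i j iA _; exact: hnA.
have main : f (hist Ro xo T) <= 2 * f G.
  apply: le_trans (f_mono _ (G :|: hist Ro xo T) (finset.subsetUr _ _)) _.
  have := ub T; rewrite -/G; move: (tele T); rewrite -/G => tT.
  rewrite lerBlDl => h; apply: (le_trans h).
  by rewrite mulr2n mulrDl mul1r lerD2l tT.
apply: (le_trans main); apply: ler_wpM2r; first exact: f_ge0.
have c0 : 0 < 1 - expR (-2 : R).
  by rewrite subr_gt0 expR_lt1 oppr_lt0.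
rewrite ler_pdivlMr // ler_piMr //.
Qed.
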